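(* If $(\mathcal{K}(X),\overline{\mathbb{F}})$ is Li-Yorke sensitive, then $(X,\mathbb{F})$ has chaotic dependence on initial conditions. Further, if $(\mathcal{F}(X),\overline{\mathbb{F}})$ is Li-Yorke sensitive, then $(X,\mathbb{F})$ is Li-Yorke sensitive.
   Context: $(X,d)$ compact metric, $\mathbb{F}=(f_n)$ continuous self-maps, $\omega_n=f_n\circ\cdots\circ f_1$. A pair $\{x,y\}$ is $\delta$-scrambled if $\limsup_n d(\omega_n(x),\omega_n(y))>\delta$ and $\liminf_n d(\omega_n(x),\omega_n(y))=0$. Li-Yorke sensitive: there is $\delta>0$ such that for every $x$ and neighborhood $U$ of $x$ there is $y\in U$ with $\{x,y\}$ $\delta$-scrambled. Chaotic dependence on initial conditions: for every $x$ and neighborhood $U$ of $x$ there is $y\in U$ with $\limsup_n d(\omega_n(x),\omega_n(y))>0$ and $\liminf_n d(\omega_n(x),\omega_n(y))=0$. $\mathcal{K}(X)$ (non-empty compact subsets) and $\mathcal{F}(X)$ (non-empty finite subsets) carry the Hausdorff metric $d_H$; the induced system is $\overline{\omega}_n(A)=\omega_n(A)$ with notions defined using $d_H$. *)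

(* Defs.v *)
From Stdlib Require Import Reals Lra List Classical ClassicalEpsilon.
Open Scope R_scope.

Section Metric.
Context {X : Type} (d : X -> X -> R).

Definition is_metric : Prop :=
  (forall x y, d x y = 0 <-> x = y) /\
  (forall x y, d x y = d y x) /\
  (forall x y z, d x z <= d x y + d y z).

Definition open_set (U : X -> Prop) : Prop :=
  forall x, U x -> exists r, r > 0 /\ forall y, d x y < r -> U y.

Definition compact_set (K : X -> Prop) : Prop :=
  forall (I : Type) (U : I -> X -> Prop),
    (forall i, open_set (U i)) ->
    (forall x, K x -> exists i, U i x) ->
    exists l : list I, forall x, K x -> exists i, In i l /\ U i x.

Definition compact_space : Prop := compact_set (fun _ => True).

Definition continuous_map (f : X -> X) : Prop :=
  forall x eps, eps > 0 -> exists del, del > 0 /\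
    forall y, d x y < del -> d (f x) (f y) < eps.
End Metric.

(* supremum / infimum of a set of reals (meaningful when it exists) *)
Definition Rsup (E : R -> Prop) : R :=
  epsilon (inhabits 0) (fun r => is_lub E r).
Definition Rinf (E : R -> Prop) : R := - Rsup (fun x => E (- x)).

Definition dist_pt_set {X : Type} (d : X -> X -> R) (x : X) (B : X -> Prop) : R :=
  Rinf (fun r => exists b, B b /\ r = d x b).

Definition dH {X : Type} (d : X -> X -> R) (A B : X -> Prop) : R :=
  Rmax (Rsup (fun r => exists a, A a /\ r = dist_pt_set d a B))
       (Rsup (fun r => exists b, B b /\ r = dist_pt_set d b A)).

Definition nonempty_compact {X : Type} (d : X -> X -> R) (A : X -> Prop) : Prop :=
  (exists x, A x) /\ compact_set d A.

Definition nonempty_finite {X : Type} (A : X -> Prop) : Prop :=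
  exists l : list X, l <> nil /\ forall x, A x <-> In x l.

Definition limsup_gt (a : nat -> R) (c : R) : Prop :=
  exists eps, eps > 0 /\ forall N, exists n, (N <= n)%nat /\ a n > c + eps.

Definition liminf_eq (a : nat -> R) (l : R) : Prop :=
  (forall eps, eps > 0 -> forall N, exists n, (N <= n)%nat /\ a n < l + eps) /\
  (forall eps, eps > 0 -> exists N, forall n, (N <= n)%nat -> a n > l - eps).

(* omega f n = f_n o ... o f_1, with f 0 playing the role of f_1 *)
Fixpoint omega {X : Type} (f : nat -> X -> X) (n : nat) (x : X) : X :=
  match n with
  | O => x
  | S m => f m (omega f m x)
  end.

Definition omega_bar {X : Type} (f : nat -> X -> X) (n : nat) (A : X -> Prop) : X -> Prop :=
  fun z => exists a, A a /\ z = omega f n a.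

Definition scrambled {Y : Type} (D : Y -> Y -> R) (w : nat -> Y -> Y)
  (delta : R) (x y : Y) : Prop :=
  limsup_gt (fun n => D (w n x) (w n y)) delta /\
  liminf_eq (fun n => D (w n x) (w n y)) 0.

Definition LY_sensitive {Y : Type} (P : Y -> Prop) (D : Y -> Y -> R)
  (w : nat -> Y -> Y) : Prop :=
  exists delta, delta > 0 /\
    forall x, P x -> forall eps, eps > 0 ->
      exists y, P y /\ D x y < eps /\ scrambled D w delta x y.

Definition chaotic_dependence {Y : Type} (P : Y -> Prop) (D : Y -> Y -> R)
  (w : nat -> Y -> Y) : Prop :=
  forall x, P x -> forall eps, eps > 0 ->
    exists y, P y /\ D x y < eps /\ scrambled D w 0 x y.

(* Main.v *)
Require Import Defs.
From Stdlib Require Import Reals Lra Lia List Classical ClassicalEpsilon.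
Open Scope R_scope.

Lemma d_refl X (d : X -> X -> R) (Hd : is_metric d) x : d x x = 0.
Proof. apply (proj1 Hd). reflexivity. Qed.
Lemma d_sym X (d : X -> X -> R) (Hd : is_metric d) x y : d x y = d y x.
Proof. apply (proj1 (proj2 Hd)). Qed.
Lemma d_tri X (d : X -> X -> R) (Hd : is_metric d) x y z : d x z <= d x y + d y z.
Proof. apply (proj2 (proj2 Hd)). Qed.
Lemma d_nonneg X (d : X -> X -> R) (Hd : is_metric d) x y : 0 <= d x y.
Proof. pose proof (d_tri X d Hd x y x). rewrite (d_sym X d Hd y x) in H.
  rewrite (d_refl X d Hd) in H. lra. Qed.

Lemma list_max_nat {A : Type} (g : A -> nat) (l : list A) :
  exists m, forall i, In i l -> (g i <= m)%nat.
Proof. induction l as [|a l [m Hm]].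
  - exists 0%nat. intros i [].
  - exists (Nat.max (g a) m). intros i [->|Hi]. lia. specialize (Hm i Hi). lia. Qed.

Lemma metric_bounded X (d : X -> X -> R) (Hd : is_metric d) (HX : compact_space d) :
  exists M, forall y z, d y z <= M.
Proof.
  destruct (classic (exists p : X, True)) as [[p _]|Hne].
  2:{ exists 0. intros y. exfalso. apply Hne. exists y; auto. }
  destruct (HX nat (fun k y => d p y < INR k)) as [l Hl].
  - intros k y Hy. exists (INR k - d p y). split. lra. intros z Hz.
    pose proof (d_tri X d Hd p y z). lra.
  - intros y _. destruct (INR_unbounded (d p y)) as [n Hn]. exists n. lra.
  - destruct (list_max_nat (fun k => k) l) as [m Hm].
    exists (2 * INR m). intros y z.
    destruct (Hl y I) as [i [Hi Hy]]. destruct (Hl z I) as [j [Hj Hz]].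
    apply Hm in Hi. apply Hm in Hj. apply le_INR in Hi. apply le_INR in Hj.
    pose proof (d_tri X d Hd y p z). rewrite (d_sym X d Hd y p) in H. lra.
Qed.

Lemma Rsup_lub (E : R -> Prop) M : (exists x, E x) -> (forall x, E x -> x <= M) -> is_lub E (Rsup E).
Proof. intros Hne Hb. destruct (completeness E) as [m Hm]. exists M; exact Hb. exact Hne.
  unfold Rsup. apply epsilon_spec. exists m; exact Hm. Qed.

Lemma Rsup_eq E m : is_lub E m -> Rsup E = m.
Proof. intros H. assert (H' : is_lub E (Rsup E)).
  { unfold Rsup. apply epsilon_spec. exists m; exact H. }
  destruct H as [H1 H2]. destruct H' as [H1' H2']. apply Rle_antisym; auto. Qed.

Lemma dist_single X (d : X -> X -> R) (Hd : is_metric d) c (S : X -> Prop) p :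
  (forall z, S z <-> z = p) -> dist_pt_set d c S = d c p.
Proof.
  intros HS. unfold dist_pt_set, Rinf. cbv beta.
  rewrite (Rsup_eq _ (- d c p)). ring.
  split.
  - intros x [b [Hb Hx]]. apply HS in Hb. subst b. lra.
  - intros ub Hub. apply Hub. exists p. split. apply HS; reflexivity. ring.
Qed.

Lemma dist_le X (d : X -> X -> R) (Hd : is_metric d) p (C : X -> Prop) c0 :
  C c0 -> dist_pt_set d p C <= d p c0.
Proof.
  intros Hc. unfold dist_pt_set, Rinf. cbv beta.
  destruct (Rsup_lub (fun x => exists b, C b /\ - x = d p b) 0) as [Hu _].
  - exists (- d p c0). exists c0. split; auto; ring.
  - intros x [b [_ Hx]]. pose proof (d_nonneg X d Hd p b). lra.
  - assert (- d p c0 <= Rsup (fun x => exists b, C b /\ - x = d p b)).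
    { apply Hu. exists c0. split; auto; ring. } lra.
Qed.

Lemma dH_single X (d : X -> X -> R) (Hd : is_metric d) M (HM : forall y z, d y z <= M)
  (S C : X -> Prop) p :
  (forall z, S z <-> z = p) -> (exists c, C c) ->
  (forall c, C c -> d p c <= dH d S C) /\
  (forall del, dH d S C > del -> exists c, C c /\ d p c > del).
Proof.
  intros HS [c0 Hc0]. unfold dH.
  assert (Hu : Rsup (fun r => exists a, S a /\ r = dist_pt_set d a C) = dist_pt_set d p C).
  { apply Rsup_eq. split.
    - intros r [a [Ha ->]]. apply HS in Ha. subst; lra.
    - intros ub Hub. apply Hub. exists p. split; auto. apply HS; auto. }
  rewrite Hu.
  assert (Hv := Rsup_lub (fun r => exists b, C b /\ r = dist_pt_set d b S) M).
  destruct Hv as [Hv1 Hv2].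
  { exists (dist_pt_set d c0 S). exists c0; auto. }
  { intros r [b [_ ->]]. rewrite (dist_single X d Hd b S p HS). apply HM. }
  split.
  - intros c Hc. eapply Rle_trans; [|apply Rmax_r].
    rewrite (d_sym X d Hd p c). rewrite <- (dist_single X d Hd c S p HS).
    apply Hv1. exists c; auto.
  - intros del Hdel. destruct (Rle_dec (dist_pt_set d p C) (Rsup (fun r => exists b, C b /\ r = dist_pt_set d b S))) as [Hle|Hgt].
    + rewrite Rmax_right in Hdel by exact Hle.
      apply NNPP. intro Hn.
      assert (Rsup (fun r => exists b, C b /\ r = dist_pt_set d b S) <= del).
      { apply Hv2. intros r [b [Hb ->]]. rewrite (dist_single X d Hd b S p HS).
        rewrite (d_sym X d Hd). apply Rnot_lt_le. intro Hl. apply Hn. exists b; split; auto. }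
      lra.
    + rewrite Rmax_left in Hdel by lra. exists c0. split; auto.
      pose proof (dist_le X d Hd p C c0 Hc0). lra.
Qed.

Lemma omega_cont X (d : X -> X -> R) f (Hf : forall n, continuous_map d (f n)) n :
  continuous_map d (omega f n).
Proof. induction n; intros x e He; simpl.
 - exists e; split; auto.
 - destruct (Hf n (omega f n x) e He) as [e1 [He1 H1]].
   destruct (IHn x e1 He1) as [e2 [He2 H2]]. exists e2; split; auto.
Qed.

Lemma omega_bar_single X (f : nat -> X -> X) n a :
  forall z, omega_bar f n (fun y => y = a) z <-> z = omega f n a.
Proof. intros z. unfold omega_bar. split.
  - intros [a' [-> ->]]; auto.
  - intros ->. exists a; auto. Qed.

Lemma cluster X (d : X -> X -> R) (Hd : is_metric d) (HX : compact_space d) (a : nat -> X) :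
  exists z, forall r, r > 0 -> forall N, exists j, (N <= j)%nat /\ d z (a j) < r.
Proof.
  apply NNPP; intro Hn.
  assert (Hall : forall z, exists r N, r > 0 /\ forall j, (N <= j)%nat -> d z (a j) >= r).
  { intro z. apply NNPP; intro Hz. apply Hn. exists z. intros r Hr N. apply NNPP; intro Hj.
    apply Hz. exists r, N. split; auto. intros j Hjn. apply Rnot_lt_ge. intro Hlt.
    apply Hj. exists j; auto. }
  destruct (HX (X * R * nat)%type (fun i y => snd (fst i) > 0 /\
      (forall j, (snd i <= j)%nat -> d (fst (fst i)) (a j) >= snd (fst i)) /\
      d (fst (fst i)) y < snd (fst i))) as [l Hl].
  - intros i y [Hr [Hj Hy]]. exists (snd (fst i) - d (fst (fst i)) y). split; [lra|].
    intros w Hw. split; [auto|split;[auto|]].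
    pose proof (d_tri X d Hd (fst (fst i)) y w). lra.
  - intros y _. destruct (Hall y) as [r [N [Hr Hj]]]. exists (y, r, N). simpl.
    split; auto. split; auto. rewrite (d_refl X d Hd). lra.
  - destruct (list_max_nat snd l) as [m Hm].
    destruct (Hl (a m) I) as [i [Hin [Hr [Hj Hy]]]].
    specialize (Hj m (Hm _ Hin)). lra.
Qed.

Lemma pigeon {A : Type} (l : list A) (P : nat -> A -> Prop) :
  (forall N, exists n, (N <= n)%nat /\ exists b, In b l /\ P n b) ->
  exists b, In b l /\ forall N, exists n, (N <= n)%nat /\ P n b.
Proof.
  induction l as [|x l IH]; intros H.
  - destruct (H 0%nat) as [n [_ [b [[] _]]]].
  - destruct (classic (forall N, exists n, (N <= n)%nat /\ P n x)) as [Hx|Hx].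
    + exists x; split; [left; auto|auto].
    + apply not_all_ex_not in Hx. destruct Hx as [N0 HN0].
      destruct IH as [b [Hb Hb2]].
      * intros N. destruct (H (Nat.max N N0)) as [n [Hn [b [[<-|Hb] Hp]]]].
        -- exfalso. apply HN0. exists n. split; auto. lia.
        -- exists n. split; [lia|]. exists b; auto.
      * exists b. split; [right; auto|auto].
Qed.
Record St (X : Type) := mkSt { sa : X; sr : R; stt : nat; sts : nat }.
Arguments mkSt {X}. Arguments sa {X}. Arguments sr {X}. Arguments stt {X}. Arguments sts {X}.

Lemma part1 X (d : X -> X -> R) (f : nat -> X -> X)
  (Hd : is_metric d) (HX : compact_space d)
  (Hf : forall n, continuous_map d (f n)) :
  LY_sensitive (nonempty_compact d) (dH d) (omega_bar f) ->
     chaotic_dependence (fun _ : X => True) d (omega f).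
Proof.
  intros [del [Hdel H]] x _ eps Heps.
  destruct (metric_bounded X d Hd HX) as [M HM].
  pose proof (omega_cont X d f Hf) as Hoc.
  pose proof (d_sym X d Hd) as Hs. pose proof (d_tri X d Hd) as Ht.
  pose proof (d_nonneg X d Hd) as Hn0.
  apply NNPP; intros NC.
  set (g := fun n y => d (omega f n x) (omega f n y)).
  set (asym := fun y => forall e, e > 0 -> exists N, forall n, (N <= n)%nat -> g n y < e).
  set (freq := fun y => forall e, e > 0 -> forall N, exists n, (N <= n)%nat /\ g n y < e).
  assert (L1 : forall y, d x y < eps -> freq y -> asym y).
  { intros y Hy Hfr e He. apply NNPP; intro Hno. apply NC. exists y. split;[|split]; auto.
    split.
    - exists (e/2). split; [lra|]. intros N. apply NNPP; intro HN. apply Hno. exists N.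
      intros n Hn. apply Rnot_le_lt. intro Hle. apply HN. exists n. split; auto.
      unfold g in Hle. lra.
    - split.
      + intros e' He' N. destruct (Hfr e' He' N) as [n [Hn Hg]]. exists n. split; auto.
        unfold g in Hg. lra.
      + intros e' He'. exists 0%nat. intros n _. pose proof (Hn0 (omega f n x) (omega f n y)). lra. }
  assert (L2 : forall a r s, asym a -> r > 0 -> exists b t, d a b < r /\ (s <= t)%nat /\
             g t b > del/2 /\ freq b).
  { intros a r s Ha Hr.
    destruct (H (fun y => y = a)) with (eps := r) as [B [[HBne _] [Hd1 [[e0 [He0 Hls]] [Hli1 Hli2]]]]].
    { split. exists a; auto. intros I U _ Hcov. destruct (Hcov a eq_refl) as [i Hi].
      exists (i :: nil). intros y ->. exists i; split; [left; reflexivity | exact Hi]. }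
    exact Hr.
    assert (HoB : forall n, exists c, omega_bar f n B c).
    { intros n. destruct HBne as [b Hb]. exists (omega f n b). exists b; auto. }
    assert (Hsg : forall n, forall c, omega_bar f n B c -> d (omega f n a) c <= dH d (omega_bar f n (fun y => y = a)) (omega_bar f n B)).
    { intros n c Hc. exact (proj1 (dH_single X d Hd M HM _ (omega_bar f n B) _ (omega_bar_single X f n a) (HoB n)) c Hc). }
    destruct (Ha (del/2)) as [N1 HN1]; [lra|].
    destruct (Hls (Nat.max s N1)) as [n [Hn Hgt]].
    destruct (proj2 (dH_single X d Hd M HM _ (omega_bar f n B) _ (omega_bar_single X f n a) (HoB n)) del) as [c [[b [Hb ->]] Hc]]; [lra|].
    exists b, n. split; [|split; [lia|split]].
    - pose proof (proj1 (dH_single X d Hd M HM (fun y => y = a) B a (fun z => conj (fun h => h) (fun h => h)) HBne) b Hb). lra.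
    - specialize (HN1 n ltac:(lia)). unfold g in *.
      pose proof (Ht (omega f n a) (omega f n x) (omega f n b)). rewrite (Hs (omega f n a) (omega f n x)) in H0. lra.
    - intros e He N. destruct (Ha (e/2)) as [N2 HN2]; [lra|].
      destruct (Hli1 (e/2) ltac:(lra) (Nat.max N N2)) as [m [Hm Hm2]].
      exists m. split; [lia|].
      assert (omega_bar f m B (omega f m b)) by (exists b; auto).
      pose proof (Hsg m _ H0). specialize (HN2 m ltac:(lia)). unfold g in *.
      pose proof (Ht (omega f m x) (omega f m a) (omega f m b)). lra. }
  set (Inv := fun a rho => asym a /\ rho > 0 /\ d x a + 2*rho < eps).
  assert (stepE : forall a rho s, Inv a rho -> exists b rho' t s', Inv b rho' /\ d a b < rho/2 /\
     rho' <= rho/2 /\ (s <= t)%nat /\ (t < s')%nat /\ g t b > del/2 /\ g s' b < rho /\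
     (forall y, d b y < 2*rho' -> d (omega f t b) (omega f t y) < del/8 /\
                                  d (omega f s' b) (omega f s' y) < rho)).
  { intros a rho s [Ha [Hr Hx]].
    destruct (L2 a (rho/2) s Ha ltac:(lra)) as [b [t [Hab [Hst [Hgt Hfb]]]]].
    assert (Hb : asym b).
    { apply L1; auto. pose proof (Ht x a b). lra. }
    destruct (Hb rho Hr) as [N HN].
    set (s' := Nat.max N (S t)).
    destruct (Hoc t b (del/8) ltac:(lra)) as [h1 [Hh1 Hc1]].
    destruct (Hoc s' b rho Hr) as [h2 [Hh2 Hc2]].
    exists b, (Rmin (rho/2) (Rmin (h1/2) (h2/2))), t, s'.
    pose proof (Rmin_l (rho/2) (Rmin (h1/2) (h2/2))).
    pose proof (Rmin_r (rho/2) (Rmin (h1/2) (h2/2))).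
    pose proof (Rmin_l (h1/2) (h2/2)). pose proof (Rmin_r (h1/2) (h2/2)).
    assert (0 < Rmin (rho/2) (Rmin (h1/2) (h2/2))).
    { apply Rmin_glb_lt; [lra|]. apply Rmin_glb_lt; lra. }
    split; [|split;[lra|split;[lra|split;[auto|split;[lia|split;[auto|split]]]]]].
    - split; auto. split; auto. pose proof (Ht x a b). lra.
    - apply HN. lia.
    - intros y Hy. split; [apply Hc1|apply Hc2]; lra. }
  set (Rel := fun st st' : St X => Inv (sa st) (sr st) -> Inv (sa st') (sr st') /\
     d (sa st) (sa st') < sr st / 2 /\ sr st' <= sr st / 2 /\ (S (sts st) <= stt st')%nat /\
     (stt st' < sts st')%nat /\ g (stt st') (sa st') > del/2 /\ g (sts st') (sa st') < sr st /\
     (forall y, d (sa st') y < 2 * sr st' -> d (omega f (stt st') (sa st')) (omega f (stt st') y) < del/8 /\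
                                  d (omega f (sts st') (sa st')) (omega f (sts st') y) < sr st)).
  assert (Hex : forall st, exists st', Rel st st').
  { intros st. destruct (classic (Inv (sa st) (sr st))) as [HI|HI].
    - destruct (stepE (sa st) (sr st) (S (sts st)) HI) as [b [rho' [t [s' Hh]]]].
      exists (mkSt b rho' t s'). intros _. exact Hh.
    - exists st. intros HI'. contradiction. }
  set (F := fun st => epsilon (inhabits st) (fun st' => Rel st st')).
  assert (HF : forall st, Rel st (F st)).
  { intros st. unfold F. apply epsilon_spec. apply Hex. }
  set (st0 := mkSt x (eps/4) 0%nat 0%nat).
  set (sq := fun n => Nat.iter n F st0).
  assert (HsqS : forall n, sq (S n) = F (sq n)) by reflexivity.
  assert (HInv : forall n, Inv (sa (sq n)) (sr (sq n))).
  { induction n.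
    - simpl. split; [|split]. intros e He. exists 0%nat. intros n _. unfold g.
      rewrite (d_refl X d Hd). lra. lra. rewrite (d_refl X d Hd). lra.
    - rewrite HsqS. apply (HF (sq n) IHn). }
  assert (HR : forall n, Rel (sq n) (sq (S n))) by (intros n; rewrite HsqS; apply HF).
  assert (Hrho : forall n, sr (sq n) <= eps/4 * (1/2)^n).
  { induction n. simpl. lra. destruct (HR n (HInv n)) as [_ [_ [Hh _]]].
    simpl pow. lra. }
  assert (Hs_ge : forall n, (n <= sts (sq n))%nat).
  { induction n. simpl; lia. destruct (HR n (HInv n)) as [_ [_ [_ [H1 [H2 _]]]]]. lia. }
  assert (Hchain : forall i k, d (sa (sq i)) (sa (sq (i + k)%nat)) <= sr (sq i) - sr (sq (i+k)%nat)).
  { intros i k. induction k.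
    - rewrite Nat.add_0_r. rewrite (d_refl X d Hd). lra.
    - rewrite Nat.add_succ_r. destruct (HR (i+k)%nat (HInv (i+k)%nat)) as [_ [H1 [H2 _]]].
      pose proof (Ht (sa (sq i)) (sa (sq (i+k)%nat)) (sa (sq (S (i+k))))). lra. }
  destruct (cluster X d Hd HX (fun n => sa (sq n))) as [z Hz].
  assert (Hzi : forall i, d (sa (sq i)) z < 2 * sr (sq i)).
  { intros i. assert (d z (sa (sq i)) <= sr (sq i)).
    { apply Rnot_lt_le. intro Hlt.
      destruct (Hz (d z (sa (sq i)) - sr (sq i)) ltac:(lra) i) as [j [Hj Hdj]].
      pose proof (Hchain i (j - i)%nat). replace (i + (j-i))%nat with j in H0 by lia.
      pose proof (Ht z (sa (sq j)) (sa (sq i))). rewrite (Hs (sa (sq j)) (sa (sq i))) in H1.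
      destruct (HInv j) as [_ [Hpj _]]. lra. }
    destruct (HInv i) as [_ [Hpi _]]. rewrite Hs. lra. }
  apply NC. exists z. split; [auto|split].
  - pose proof (Hzi 0%nat). simpl in H0. lra.
  - split.
    + exists (del/4). split; [lra|]. intros N.
      destruct (HR N (HInv N)) as [_ [_ [_ [H1 [H2 [H3 [_ H4]]]]]]].
      exists (stt (sq (S N))). split. pose proof (Hs_ge N). lia.
      destruct (H4 z (Hzi (S N))) as [H5 _].
      unfold g in H3. pose proof (Ht (omega f (stt (sq (S N))) x) (omega f (stt (sq (S N))) z) (omega f (stt (sq (S N))) (sa (sq (S N))))).
      rewrite (Hs (omega f (stt (sq (S N))) z)) in H0. lra.
    + split.
      * intros e He N.
        destruct (pow_lt_1_zero (1/2) ltac:(rewrite Rabs_pos_eq; lra) (e / eps)) as [i0 Hi0].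
        { apply Rdiv_lt_0_compat; lra. }
        set (i := Nat.max i0 N).
        specialize (Hi0 i ltac:(unfold i; lia)).
        rewrite Rabs_pos_eq in Hi0 by (apply pow_le; lra).
        destruct (HR i (HInv i)) as [_ [_ [_ [H1 [H2 [_ [H3 H4]]]]]]].
        exists (sts (sq (S i))). split. pose proof (Hs_ge (S i)). unfold i in *. lia.
        destruct (H4 z (Hzi (S i))) as [_ H5].
        unfold g in H3. pose proof (Ht (omega f (sts (sq (S i))) x) (omega f (sts (sq (S i))) (sa (sq (S i)))) (omega f (sts (sq (S i))) z)).
        pose proof (Hrho i).
        assert (eps/4 * (1/2)^i < e/4).
        { apply Rmult_lt_compat_l with (r := eps/4) in Hi0; [|lra].
          replace (eps/4 * (e/eps)) with (e/4) in Hi0 by (field; lra). lra. }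
        lra.
      * intros e He. exists 0%nat. intros n _. pose proof (Hn0 (omega f n x) (omega f n z)). lra.
Qed.
Lemma part2 X (d : X -> X -> R) (f : nat -> X -> X)
  (Hd : is_metric d) (HX : compact_space d) :
  LY_sensitive (@nonempty_finite X) (dH d) (omega_bar f) ->
     LY_sensitive (fun _ : X => True) d (omega f).
Proof.
  intros [del [Hdel H]]. exists del; split; auto. intros a _ eps Heps.
  destruct (metric_bounded X d Hd HX) as [M HM].
  destruct (H (fun y => y = a)) with (eps := eps) as [B [[l [Hl HB]] [Hd1 [[e0 [He0 Hls]] [Hli1 Hli2]]]]].
  { exists (a :: nil). split. discriminate. intros x; simpl; split; [intros ->; auto | intros [->|[]]; auto]. }
  exact Heps.
  assert (HBne : exists b, B b).
  { destruct l as [|b l]. congruence. exists b. apply HB. left; auto. }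
  assert (Hsg : forall n, forall c, omega_bar f n B c -> d (omega f n a) c <= dH d (omega_bar f n (fun y => y = a)) (omega_bar f n B)).
  { intros n c Hc. eapply (proj1 (dH_single X d Hd M HM _ _ _ (omega_bar_single X f n a) _)); eauto.
    Unshelve. destruct HBne as [b Hb]. exists (omega f n b). exists b; auto. }
  assert (Hp : forall N, exists n, (N <= n)%nat /\ exists b, In b l /\ d (omega f n a) (omega f n b) > del + e0).
  { intros N. destruct (Hls N) as [n [Hn Hgt]]. exists n; split; auto.
    destruct (dH_single X d Hd M HM _ (omega_bar f n B) _ (omega_bar_single X f n a)) as [_ H2].
    { destruct HBne as [b Hb]. exists (omega f n b). exists b; auto. }
    destruct (H2 _ Hgt) as [c [[b [Hb ->]] Hc]]. exists b; split; [apply HB; auto | auto]. }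
  destruct (pigeon l _ Hp) as [b [Hbl Hb]].
  exists b. split; [auto|split].
  - assert (Hx : B b) by (apply HB; auto).
    pose proof (proj1 (dH_single X d Hd M HM (fun y => y = a) B a (fun z => conj (fun h => h) (fun h => h)) (ex_intro _ b Hx)) b Hx). lra.
  - split.
    + exists e0. split; auto.
    + split.
      * intros e He N. destruct (Hli1 e He N) as [n [Hn Hn2]]. exists n. split; auto.
        assert (omega_bar f n B (omega f n b)) by (exists b; split; auto; apply HB; auto).
        pose proof (Hsg n _ H0). lra.
      * intros e He. exists 0%nat. intros n _. pose proof (d_nonneg X d Hd (omega f n a) (omega f n b)). lra.
Qed.

Theorem mainTheorem10 (X : Type) (d : X -> X -> R) (f : nat -> X -> X)
  (Hd : is_metric d) (HX : compact_space d)
  (Hf : forall n, continuous_map d (f n)) :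
  (LY_sensitive (nonempty_compact d) (dH d) (omega_bar f) ->
     chaotic_dependence (fun _ : X => True) d (omega f)) /\
  (LY_sensitive (@nonempty_finite X) (dH d) (omega_bar f) ->
     LY_sensitive (fun _ : X => True) d (omega f)).
Proof.
  split; [apply part1 | apply part2]; auto.
Qed.
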